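(* Let $\varphi=\frac{1+\sqrt5}{2}$ and, for every integer $k$, let $F_k=\frac{\varphi^k-(-1/\varphi)^k}{\varphi+1/\varphi}$ (so $F_0=0$, $F_1=F_2=1$, $F_{k}=F_{k-1}+F_{k-2}$). Let $b$, $b^+$, $N$ be linear operators on a complex inner product space, with $b^+$ the adjoint of $b$ and $N$ hermitian, satisfying $$bb^+-\varphi\, b^+b=\left(-\tfrac1\varphi\right)^N,\qquad [N,b^+]=b^+,\qquad [N,b]=-b,$$ where $\left(-\frac1\varphi\right)^N$ acts on any eigenvector of $N$ with eigenvalue $k$ as multiplication by $\left(-\frac1\varphi\right)^k$. Suppose there is a vacuum vector $|0\rangle$ with $\langle 0|0\rangle=1$, $b|0\rangle=0$ and $N|0\rangle=0$. For $n\ge 0$ set $|n\rangle=\frac{(b^+)^n}{\sqrt{F_1F_2\cdots F_n}}|0\rangle$. Then for every $n\ge0$: $N|n\rangle=n|n\rangle$, $b^+b|n\rangle=F_n|n\rangle$, $bb^+|n\rangle=F_{n+1}|n\rangle$, the vectors $|n\rangle$ are orthonormal, and the Hamiltonian $H=\frac{\hbar\omega}{2}(b^+b+bb^+)$ satisfies $H|n\rangle=E_n|n\rangle$ with $$E_n=\frac{\hbar\omega}{2}F_{n+2}.$$ In particular $E_{n+1}-E_n=\frac{\hbar\omega}{2}F_{n+1}$ and $\lim_{n\to\infty}E_{n+1}/E_n=\varphi$.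
   Context: $\hbar>0$ and $\omega>0$ are constants. The empty product $F_1\cdots F_0$ equals $1$. *)

(* Defs.v *)
From HB Require Import structures.
From mathcomp Require Import all_boot all_order all_algebra.
From mathcomp Require Import all_classical all_reals all_analysis.
From mathcomp Require Import complex.
Set Implicit Arguments. Unset Strict Implicit. Unset Printing Implicit Defensive.
Import Order.TTheory GRing.Theory Num.Theory.
Local Open Scope ring_scope.

Definition phi {R : realType} : R := (1 + Num.sqrt 5) / 2.

Definition Fib {R : realType} (k : int) : R :=
  (phi ^ k - (- phi^-1) ^ k) / (phi + phi^-1).

Definition cR {R : realType} (x : R) : R[i] := (x%:C)%C.

(* [dot] is a complex inner product on V (linear in the second argument,
   conjugate-linear in the first, as in Dirac's bra-ket notation). *)
Definition inner_product {R : realType} {V : lmodType R[i]}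
    (dot : V -> V -> R[i]) : Prop :=
  [/\ (forall (u v w : V) (a : R[i]), dot u (a *: v + w) = a * dot u v + dot u w),
      (forall u v : V, dot u v = Num.conj (dot v u)),
      (forall u : V, 0 <= dot u u) &
      (forall u : V, dot u u = 0 -> u = 0)].

Definition is_adjoint {R : realType} {V : lmodType R[i]}
    (dot : V -> V -> R[i]) (A B : V -> V) : Prop :=
  forall u v : V, dot u (A v) = dot (B u) v.

Definition self_adjoint {R : realType} {V : lmodType R[i]}
    (dot : V -> V -> R[i]) (A : V -> V) : Prop := is_adjoint dot A A.

Definition ket {R : realType} {V : lmodType R[i]} (bp : V -> V) (v0 : V)
    (n : nat) : V :=
  cR (Num.sqrt (\prod_(1 <= i < n.+1) Fib (i%:Z)))^-1 *: iter n bp v0.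

Definition Ham {R : realType} {V : lmodType R[i]} (hbar omega : R)
    (b bp : V -> V) (v : V) : V :=
  cR (hbar * omega / 2) *: (bp (b v) + b (bp v)).

Definition Energy {R : realType} (hbar omega : R) (n : nat) : R :=
  hbar * omega / 2 * Fib (n.+2)%:Z.

(* Main.v *)
Require Import Defs.
From HB Require Import structures.
From mathcomp Require Import all_boot all_order all_algebra.
From mathcomp Require Import all_classical all_reals all_analysis.
From mathcomp Require Import complex.
From mathcomp Require Import ring lra.
Import Order.TTheory GRing.Theory Num.Theory.
Import numFieldNormedType.Exports.
Local Open Scope classical_set_scope.
Local Open Scope ring_scope.
Section RealPart.
Variable R : realType.
Notation p := (@phi R).
Notation fib n := (@Fib R (Posz n)).

Lemma phi_gt1 : 1 < p.
Proof.
rewrite /phi ltr_pdivlMr // mul1r.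
have : Num.sqrt 1 < Num.sqrt (5:R) by rewrite ltr_sqrt //; lra.
rewrite sqrtr1.
lra.
Qed.

Lemma phi_gt0 : 0 < p.
Proof. by apply: lt_trans phi_gt1. Qed.

Lemma phi_sq : p * p = p + 1.
Proof.
have h : Num.sqrt (5:R) ^+ 2 = 5 by rewrite sqr_sqrtr //; lra.
rewrite /phi; move: h; set s := Num.sqrt _ => h.
rewrite expr2 in h.
have -> : (1+s)/2*((1+s)/2) = (1 + 2*s + s*s)/4 :> R by field.
by rewrite h; field.
Qed.

Lemma phi_q : p - p^-1 = 1.
Proof.
have h := phi_sq; have p0 : p != 0 by rewrite gt_eqF // phi_gt0.
apply: (mulIf p0). rewrite mulrBl mulVf // h. ring.
Qed.

Lemma D_neq0 : p + p^-1 != 0.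
Proof. by have h := phi_gt0; rewrite gt_eqF // addr_gt0 ?invr_gt0. Qed.

Lemma FibE n : fib n = (p ^+ n - (- p^-1) ^+ n) / (p + p^-1).
Proof. by []. Qed.

Lemma fib_rec n : fib n.+1 = p * fib n + (- p^-1) ^+ n.
Proof.
have p0 : p != 0 by rewrite gt_eqF // phi_gt0.
have := D_neq0; rewrite !FibE !exprS.
move: (p ^+ n) ((- p^-1) ^+ n) => a b D0.
field. by rewrite p0 /= gt_eqF // addr_gt0 // mulr_gt0 // phi_gt0.
Qed.

Lemma fib0 : fib 0 = 0.
Proof. by rewrite FibE !expr0 subrr mul0r. Qed.

Lemma fib1 : fib 1 = 1.
Proof. by rewrite fib_rec fib0 mulr0 add0r expr0. Qed.

Lemma fibSS n : fib n.+2 = fib n.+1 + fib n.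
Proof.
rewrite !fib_rec exprS.
have h := phi_sq; have h2 := phi_q.
have -> : - p^-1 = 1 - p by lra.
move: (fib n) ((1 - p) ^+ n) => a b.
rewrite mulrDr mulrA h. ring.
Qed.

Lemma fib_pos n : 1 <= fib n.+1 /\ n.+1%:R <= fib n.+2.
Proof.
elim: n => [|n [h1 h2]].
  by rewrite fibSS fib1 fib0 addr0 lexx.
split; first by apply: le_trans h2; rewrite ler1n.
rewrite fibSS -natr1; lra.
Qed.

Lemma fib_gt0 n : 0 < fib n.+1.
Proof. by have [h _] := fib_pos n; apply: lt_le_trans h. Qed.

Lemma prod_fib_gt0 n : 0 < \prod_(1 <= i < n.+1) fib i.
Proof.
elim: n => [|n IH]; first by rewrite big_geq.
by rewrite big_nat_recr //= mulr_gt0 // fib_gt0.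
Qed.

Lemma ratio_bound n : `| p - fib n.+3 / fib n.+2 | <= harmonic n.
Proof.
have [_ h2] := fib_pos n.
have g0 : 0 < fib n.+2 by apply: lt_le_trans h2; rewrite ltr0n.
have -> : p - fib n.+3 / fib n.+2 = - ((- p^-1) ^+ n.+2 / fib n.+2).
  rewrite [fib n.+3]fib_rec mulrDl mulfK ?gt_eqF //. ring.
rewrite normrN normrM normfV (gtr0_norm g0) /=.
have hq : `|(- p^-1) ^+ n.+2| <= 1.
  rewrite normrX normrN exprn_ile1 // ger0_norm ?invr_ge0 ?ltW ?phi_gt0 //.
  by rewrite invf_lt1 ?phi_gt0 // phi_gt1.
have ha : 0 < n.+1%:R :> R by rewrite ltr0n.
rewrite ler_pdivrMr //; apply: le_trans hq _.
rewrite mulrC ler_pdivlMr // mul1r //.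

Qed.

End RealPart.

Lemma cR_conj (R : realType) (x : R) : Num.conj (cR x) = cR x.
Proof. by rewrite conj_Creal // /cR complex_real. Qed.

Lemma cRD (R : realType) (x y : R) : cR (x + y) = cR x + cR y.
Proof. by rewrite /cR rmorphD. Qed.
Lemma cRM (R : realType) (x y : R) : cR (x * y) = cR x * cR y.
Proof. by rewrite /cR rmorphM. Qed.
Lemma cR0 (R : realType) : cR (0:R) = 0.
Proof. by rewrite /cR rmorph0. Qed.
Lemma cR1 (R : realType) : cR (1:R) = 1.
Proof. by rewrite /cR rmorph1. Qed.
Lemma cRn (R : realType) n : cR (n%:R : R) = n%:R.
Proof. by rewrite /cR rmorph_nat. Qed.

Section Dot.
Variables (R : realType) (V : lmodType R[i]) (dot : V -> V -> R[i]).
Hypothesis ip : inner_product dot.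

Lemma dot0r u : dot u 0 = 0.
Proof.
case: ip => h _ _ _; have := h u 0 0 1.
rewrite scaler0 addr0 mul1r => e.
by apply: (addrI (dot u 0)); rewrite addr0 -e.
Qed.

Lemma dotZr u v a : dot u (a *: v) = a * dot u v.
Proof. by case: ip => h _ _ _; rewrite -[a *: v]addr0 h dot0r addr0. Qed.

Lemma dot0l u : dot 0 u = 0.
Proof. by case: ip => _ h _ _; rewrite h dot0r conjC0. Qed.

Lemma dotZl u v a : dot (a *: u) v = Num.conj a * dot u v.
Proof. by case: ip => _ h _ _; rewrite h dotZr rmorphM /= -h. Qed.

End Dot.
Arguments dot0r {R V dot}.
Arguments dot0l {R V dot}.
Arguments dotZr {R V dot}.
Arguments dotZl {R V dot}.

Theorem mainTheorem1 (R : realType) (hbar omega : R)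
    (hhbar : 0 < hbar) (homega : 0 < omega)
    (V : lmodType R[i]) (dot : V -> V -> R[i])
    (b bp N : {linear V -> V}) (v0 : V) :
  inner_product dot ->
  is_adjoint dot b bp ->
  self_adjoint dot N ->
  (forall (k : int) (v : V), N v = cR (k%:~R) *: v ->
      b (bp v) - cR phi *: bp (b v) = cR ((- phi^-1) ^ k) *: v) ->
  (forall v : V, N (bp v) - bp (N v) = bp v) ->
  (forall v : V, N (b v) - b (N v) = - b v) ->
  dot v0 v0 = 1 -> b v0 = 0 -> N v0 = 0 ->
  (forall n : nat, N (ket bp v0 n) = cR n%:R *: ket bp v0 n) /\
      (forall n : nat, bp (b (ket bp v0 n)) = cR (Fib n%:Z) *: ket bp v0 n) /\
      (forall n : nat, b (bp (ket bp v0 n)) = cR (Fib n.+1%:Z) *: ket bp v0 n) /\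
      (forall m n : nat, dot (ket bp v0 m) (ket bp v0 n) = (m == n)%:R) /\
      (forall n : nat, Ham hbar omega b bp (ket bp v0 n)
                        = cR (Energy hbar omega n) *: ket bp v0 n) /\
      (forall n : nat, Energy hbar omega n.+1 - Energy hbar omega n
                        = hbar * omega / 2 * Fib n.+1%:Z) /\
      ((fun n : nat => Energy hbar omega n.+1 / Energy hbar omega n)
         @ \oo --> (phi : R)).
Proof.
move=> ip adj _ hcomm hNbp _ dot00 bv0 Nv0.
pose u n := iter n bp v0.
have uS n : u n.+1 = bp (u n) by [].
have HN n : N (u n) = cR n%:R *: u n.
  elim: n => [|n IH]; first by rewrite /= Nv0 cRn scale0r.
  rewrite uS; move: (hNbp (u n)); rewrite IH linearZ /= => /eqP.
  rewrite subr_eq => /eqP ->; rewrite !cRn -[in RHS]natr1 scalerDl scale1r addrC.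
  by [].
have Hb n : b (u n.+1) = cR (Fib n.+1%:Z) *: u n.
  elim: n => [|n IH].
    move: (hcomm 0 v0); rewrite Nv0 cR0 scale0r => /(_ erefl).
    by rewrite bv0 linear0 scaler0 subr0 expr0z fib1 => ->.
  rewrite uS; move: (hcomm n.+1 (u n.+1) (HN n.+1)) => /eqP.
  rewrite subr_eq => /eqP ->; rewrite IH linearZ /= -uS scalerA -scalerDl.
  by rewrite -cRM -cRD [Fib n.+2%:Z]fib_rec addrC.
have Hbp n : bp (b (u n)) = cR (Fib n%:Z) *: u n.
  case: n => [|n]; first by rewrite /= bv0 linear0 fib0 cR0 scale0r.
  by rewrite Hb linearZ.
pose P n := \prod_(1 <= i < n.+1) (Fib i%:Z : R).
have Hdot m n : dot (u m) (u n) = if m == n then cR (P n) else 0.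
  elim: m n => [|m IH] [|n] /=.
  - by rewrite dot00 /P big_geq // cR1.
  - have [_ hc _ _] := ip.
    by rewrite hc -adj bv0 (dot0r ip) conjC0.
  - by rewrite -adj bv0 (dot0r ip).
  - rewrite -adj Hb (dotZr ip) IH eqSS; case: (m =P n) => [_|_]; last by rewrite mulr0.
    by rewrite /P [in RHS]big_nat_recr //= cRM mulrC.
pose c n := cR (Num.sqrt (P n))^-1.
have hc n : c n = cR (Num.sqrt (P n))^-1 by [].
have ketE n : ket bp v0 n = c n *: u n by [].
have cconj n : Num.conj (c n) = c n.
  by rewrite hc cR_conj.
have ccP n : c n * c n * cR (P n) = 1.
  rewrite hc -!cRM -cR1; congr cR.
  have hP := prod_fib_gt0 R n; rewrite -/(P n) in hP.
  have hs : Num.sqrt (P n) != 0 by rewrite gt_eqF // sqrtr_gt0.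
  rewrite -{3}(sqr_sqrtr (ltW hP)) expr2; field.
  by [].
pose c0 := hbar * omega / 2.
have c0gt : 0 < c0 by rewrite /c0 divr_gt0 // mulr_gt0.
split.
  move=> n; rewrite ketE linearZ /= HN !scalerA mulrC //.
split.
  move=> n; rewrite ketE !linearZ /= Hbp !scalerA mulrC //.
split.
  move=> n; rewrite ketE !linearZ /= -uS Hb !scalerA mulrC //.
split.
  move=> m n; rewrite !ketE (dotZl ip) (dotZr ip) Hdot cconj.
  case: eqP => [->|_]; last by rewrite !mulr0.
  by rewrite mulrA ccP.
split.
  move=> n; rewrite /Ham ketE !linearZ /= Hbp -uS Hb !scalerA -scalerDl scalerA.
  by rewrite /Energy fibSS [in RHS]cRM cRD; congr (_ *: _); ring.
split.
  by move=> n; rewrite /Energy (fibSS _ n.+1); ring.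
apply/cvgrPdist_le => e e0.
have := cvg_harmonic (R := R); move/cvgr_dist_le => /(_ e e0).
apply: filterS => n hn.
have -> : Energy hbar omega n.+1 / Energy hbar omega n = Fib n.+3%:Z / Fib n.+2%:Z.
  rewrite /Energy -/c0 invfM mulrACA mulfV ?gt_eqF // mul1r //.
apply: le_trans (ratio_bound R n) _.
by move: hn; rewrite sub0r normrN ger0_norm // harmonic_ge0.
Qed.
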